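(* Let $\mathsf{M}$ be a finite set of $N\ge1$ elements and let $\mathcal{C}$ be the set of all clusterings (partitions into nonempty blocks) of $\mathsf{M}$. The proposal kernel $\phi_Y$ on $\mathcal{C}$ described in the context is irreducible.
   Context: Proposal kernel $\phi_Y(\mathbf{A},\mathbf{A}')$ with parameter $\theta_1>0$: given $\mathbf{A}=\{A_1,\dots,A_n\}$, choose a cluster $A_i$ uniformly at random; choose $k\in\{1,\dots,|A_i|\}$ according to the truncated exponential distribution $PE(k;\theta_1)=\frac{1-e^{-\theta_1}}{e^{-\theta_1}}\sum_{m=1}^\infty\exp[-\theta_1((m-1)|A_i|+k)]$; choose a subset of $k$ points of $A_i$ uniformly at random among the $\binom{|A_i|}{k}$ subsets; choose $A_j$ uniformly at random from $(\mathbf{A}\setminus\{A_i\})\cup\{B\}$ where $B$ is an empty set representing a new cluster; move the chosen points from $A_i$ to $A_j$ (discarding $A_i$ if it becomes empty). The resulting clustering is $\mathbf{A}'$. Irreducible means: for every $\mathbf{A},\mathbf{A}'\in\mathcal{C}$ there is $m$ with positive $m$-step transition probability from $\mathbf{A}$ to $\mathbf{A}'$. *)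

(* Defs.v *)
From HB Require Import structures.
From mathcomp Require Import all_boot all_order all_algebra.
From mathcomp Require Import all_classical all_reals all_analysis.
Set Implicit Arguments. Unset Strict Implicit. Unset Printing Implicit Defensive.
Import Order.TTheory GRing.Theory Num.Theory.
Local Open Scope ring_scope.

(* A clustering of the finite ground set M = [set: T]: a partition of M into
   nonempty blocks (MathComp's [partition] requires set0 \notin P). *)
Definition clustering (T : finType) (A : {set {set T}}) : bool :=
  finset.partition A [set: T].

Definition PE (R : realType) (theta : R) (n k : nat) : R :=
  (1 - expR (- theta)) / expR (- theta) *
  limn (fun N => \sum_(m < N) expR (- theta * ((m * n + k)%N)%:R)).

(* Result of moving the points S (subset of Ai) to the target cluster:
   [None] is the new empty cluster B, [Some Aj] an existing cluster Aj != Ai.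
   Ai is discarded if it becomes empty. *)
Definition move_pts (T : finType) (A : {set {set T}}) (Ai S : {set T})
    (j : option {set T}) : {set {set T}} :=
  let rest := if Ai :\: S == finset.set0 then finset.set0 else [set Ai :\: S] in
  match j with
  | None => ((A :\ Ai) :|: rest) :|: [set S]
  | Some Aj => (((A :\ Ai) :\ Aj) :|: rest) :|: [set Aj :|: S]
  end.

(* One-step transition probability phi_Y(A, A') of the proposal kernel:
   Ai uniform among the #|A| clusters; k ~ PE(.;theta) on 1..|Ai|; S uniform
   among the 'C(|Ai|,k) k-subsets of Ai; target uniform among the
   #|A| - 1 + 1 = #|A| elements of (A \ {Ai}) u {B}. *)
Definition phiY (R : realType) (theta : R) (T : finType)
    (A A' : {set {set T}}) : R :=
  \sum_(Ai in A) (#|A|%:R)^-1 *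
   \sum_(1 <= k < #|Ai|.+1) PE theta #|Ai| k *
    \sum_(S in finset.powerset Ai | #|S| == k) ('C(#|Ai|, k)%:R)^-1 *
     ((\sum_(Aj in A :\ Ai)
         (#|A|%:R)^-1 * (move_pts A Ai S (Some Aj) == A')%:R)
      + (#|A|%:R)^-1 * (move_pts A Ai S None == A')%:R).

Fixpoint phiY_n (R : realType) (theta : R) (T : finType) (m : nat)
    (A A' : {set {set T}}) : R :=
  match m with
  | 0 => (A == A')%:R
  | m'.+1 => \sum_(B : {set {set T}} | clustering B)
               phiY theta A B * phiY_n theta m' B A'
  end.

(* Main.v *)
Require Import Defs.
From HB Require Import structures.
From mathcomp Require Import all_boot all_order all_algebra.
From mathcomp Require Import all_classical all_reals all_analysis.
From mathcomp Require Import ring lra.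
Import Order.TTheory GRing.Theory Num.Theory.
Local Open Scope ring_scope.

Section PEsec.
Variable R : realType.

Lemma geo_bound (q : R) N : 0 <= q -> q < 1 ->
  \sum_(m < N) q ^+ m <= (1 - q)^-1.
Proof.
move=> q0 q1.
have key : (\sum_(m < N) q ^+ m) * (1 - q) = 1 - q ^+ N.
  elim: N => [|N IH]; first by rewrite big_ord0 mul0r expr0 subrr.
  by rewrite big_ord_recr /= mulrDl IH exprSr; ring.
rewrite -[_^-1]mul1r ler_pdivlMr ?subr_gt0 // key.
by rewrite lerBlDr lerDl exprn_ge0.
Qed.

Lemma PE_gt0 (theta : R) n k : 0 < theta -> (0 < n)%N -> 0 < PE theta n k.
Proof.
move=> th0 n0.
set q := expR (- theta).
have q0 : 0 < q by apply: expR_gt0.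
have q1 : q < 1 by rewrite /q expR_lt1 oppr_lt0.
set u := fun N => \sum_(m < N) expR (- theta * ((m * n + k)%N)%:R).
have term : forall m : nat, expR (- theta * ((m * n + k)%N)%:R) = q ^+ (m * n + k).
  by move=> m; rewrite mulrC expRM_natl.
have ndu : {homo u : a b / (a <= b)%N >-> a <= b}.
  apply/nondecreasing_seqP => N; rewrite /u big_ord_recr /= lerDl.
  by rewrite term exprn_ge0 // ltW.
have cu : cvgn u.
  apply: nondecreasing_is_cvgn => //.
  exists (1 - q)^-1 => _ [N _ <-].
  rewrite /u; apply: le_trans (geo_bound q N (ltW q0) q1).
  apply: ler_sum => m _; rewrite term.
  apply: ler_wiXn2l; [exact: ltW|exact: ltW|].
  by apply: (leq_trans _ (leq_addr k _)); rewrite leq_pmulr.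
rewrite /PE; apply: mulr_gt0.
  by apply: divr_gt0 => //; rewrite subr_gt0.
apply: lt_le_trans (nondecreasing_cvgn_le ndu cu 1%N).
by rewrite /u big_ord1 expR_gt0.
Qed.
End PEsec.

Set Implicit Arguments. Unset Strict Implicit.
Section Main.
Variable R : realType.
Variable theta : R.
Hypothesis th0 : 0 < theta.
Variable T : finType.

Lemma sum_pos (I : eqType) (r : seq I) (P : pred I) (F : I -> R) i0 :
  i0 \in r -> P i0 -> (forall i, i \in r -> P i -> 0 <= F i) -> 0 < F i0 ->
  0 < \sum_(i <- r | P i) F i.
Proof.
move=> ir Pi Fge Fi; rewrite (big_rem i0) //= Pi.
apply: (lt_le_trans Fi); rewrite lerDl big_seq_cond.
apply: sumr_ge0 => i /andP[/mem_rem ir' Pi']; exact: Fge.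
Qed.
Arguments sum_pos {I r P F} [i0].

Lemma phiY_ge0 (A B : {set {set T}}) : 0 <= phiY theta A B.
Proof.
rewrite /phiY; apply: sumr_ge0 => Ai _; apply: mulr_ge0; first by rewrite invr_ge0.
rewrite big_seq; apply: sumr_ge0 => k; rewrite mem_index_iota => /andP[k1 kn].
apply: mulr_ge0; first by apply/ltW/PE_gt0 => //; apply: (leq_trans k1); rewrite -ltnS.
apply: sumr_ge0 => S _; apply: mulr_ge0; first by rewrite invr_ge0 ler0n.
apply: addr_ge0; first apply: sumr_ge0 => Aj _; apply: mulr_ge0;
  by rewrite ?invr_ge0 ?ler0n.
Qed.

Lemma phiY_pos (A B : {set {set T}}) (Ai S : {set T}) (j : option {set T}) :
  Ai \in A -> S \subset Ai -> S != finset.set0 ->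
  (if j is Some Aj then Aj \in A :\ Ai else true) ->
  move_pts A Ai S j = B -> 0 < phiY theta A B.
Proof.
move=> AiA SAi S0 hj <-.
have cA : (0 < #|A|)%N by apply/card_gt0P; exists Ai.
have cS : (0 < #|S|)%N by rewrite card_gt0.
have SAic : (#|S| <= #|Ai|)%N := subset_leq_card SAi.
have cA' : 0 < (#|A|%:R : R)^-1 by rewrite invr_gt0 ltr0n.
rewrite /phiY; apply: (sum_pos (i0 := Ai)) => //.
- by rewrite mem_index_enum.
- move=> Ai' _ _; apply: mulr_ge0; first by rewrite invr_ge0.
  rewrite big_seq; apply: sumr_ge0 => k; rewrite mem_index_iota => /andP[k1 kn].
  apply: mulr_ge0; first by apply/ltW/PE_gt0 => //; apply: (leq_trans k1); rewrite -ltnS.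
  apply: sumr_ge0 => S' _; apply: mulr_ge0; first by rewrite invr_ge0 ler0n.
  apply: addr_ge0; first apply: sumr_ge0 => Aj _; apply: mulr_ge0;
    by rewrite ?invr_ge0 ?ler0n.
apply: mulr_gt0 => //.
apply: (sum_pos (i0 := #|S|)) => //.
- by rewrite mem_index_iota cS ltnS.
- move=> k; rewrite mem_index_iota => /andP[k1 kn] _.
  apply: mulr_ge0; first by apply/ltW/PE_gt0 => //; apply: (leq_trans k1); rewrite -ltnS.
  apply: sumr_ge0 => S' _; apply: mulr_ge0; first by rewrite invr_ge0 ler0n.
  apply: addr_ge0; first apply: sumr_ge0 => Aj _; apply: mulr_ge0;
    by rewrite ?invr_ge0 ?ler0n.
apply: mulr_gt0; first by apply: PE_gt0 => //; exact: leq_trans cS SAic.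
apply: (sum_pos (i0 := S)).
- by rewrite mem_index_enum.
- by rewrite /= powersetE SAi eqxx.
- move=> S' _ _; apply: mulr_ge0; first by rewrite invr_ge0 ler0n.
  apply: addr_ge0; first apply: sumr_ge0 => Aj _; apply: mulr_ge0;
    by rewrite ?invr_ge0 ?ler0n.
apply: mulr_gt0; first by rewrite invr_gt0 ltr0n bin_gt0.
case: j hj => [Aj hAj|_].
- apply: ltr_wpDr; first by apply: mulr_ge0; rewrite ?invr_ge0 ?ler0n.
  apply: (sum_pos (i0 := Aj)).
  + by rewrite mem_index_enum.
  + exact: hAj.
  + by move=> Aj' _ _; apply: mulr_ge0; rewrite ?invr_ge0 ?ler0n.
  by rewrite eqxx mulr1.
- apply: ltr_wpDl; last by rewrite eqxx mulr1.
  by apply: sumr_ge0 => Aj _; apply: mulr_ge0; rewrite ?invr_ge0 ?ler0n.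
Qed.

Definition merge (A : {set {set T}}) (Ai Aj : {set T}) := (Aj :|: Ai) |: ((A :\ Ai) :\ Aj).

Lemma merge_eq (A : {set {set T}}) (Ai Aj : {set T}) : move_pts A Ai Ai (Some Aj) = merge A Ai Aj.
Proof. by rewrite /move_pts finset.setDv eqxx finset.setU0 finset.setUC. Qed.

Lemma merge_clust (A : {set {set T}}) (Ai Aj : {set T}) : clustering A -> Ai \in A -> Aj \in A -> Ai != Aj ->
  clustering (merge A Ai Aj).
Proof.
rewrite /clustering => hA AiA AjA nij.
have P1 := partitionD1 hA AiA.
have AjA' : Aj \in A :\ Ai by rewrite !inE eq_sym nij.
have P2 := partitionD1 P1 AjA'.
have n0 : Aj :|: Ai != finset.set0.
  by rewrite finset.setU_eq0 negb_and (partition_neq0 hA AjA).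
have dj : [disjoint Aj :|: Ai & ([set: T] :\: Ai) :\: Aj].
  rewrite -setI_eq0; apply/eqP/setP => x; rewrite !inE.
  by case: (x \in Ai); case: (x \in Aj).
have P3 := partitionU1 P2 n0 dj.
have -> : [set: T] = (Aj :|: Ai) :|: (([set: T] :\: Ai) :\: Aj).
  by apply/setP => x; rewrite !inE; case: (x \in Ai); case: (x \in Aj).
exact: P3.
Qed.

Lemma merge_card (A : {set {set T}}) (Ai Aj : {set T}) : Ai \in A -> Aj \in A -> Ai != Aj ->
  (#|merge A Ai Aj| < #|A|)%N.
Proof.
move=> AiA AjA nij.
have AjA' : Aj \in A :\ Ai by rewrite !inE eq_sym nij.
rewrite /merge cardsU1 (cardsD1 Ai A) AiA (cardsD1 Aj (A :\ Ai)) AjA'.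
by case: (_ \notin _).
Qed.

Lemma merge_back (A : {set {set T}}) (Ai Aj : {set T}) : clustering A -> Ai \in A -> Aj \in A -> Ai != Aj ->
  move_pts (merge A Ai Aj) (Aj :|: Ai) Ai None = A.
Proof.
rewrite /clustering => hA AiA AjA nij.
have tI := finset.trivIsetP (partition_trivIset hA).
have Ai0 := partition_neq0 hA AiA.
have Aj0 := partition_neq0 hA AjA.
have dij : Aj :&: Ai = finset.set0.
  by apply/eqP; rewrite setI_eq0; apply: tI => //; rewrite eq_sym.
have e1 : (Aj :|: Ai) :\: Ai = Aj.
  apply/setP => x; rewrite !inE; case xi: (x \in Ai); case xj: (x \in Aj) => //=.
  by move/setP: dij => /(_ x); rewrite !inE xi xj.
have nin : Aj :|: Ai \notin (A :\ Ai) :\ Aj.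
  rewrite !inE; apply/negP => /and3P[n1 n2 CA].
  have := tI _ _ CA AiA n2; rewrite -setI_eq0.
  rewrite (finset.setIidPr (finset.subsetUr _ _)); by rewrite (negbTE Ai0).
rewrite /move_pts /merge e1 (negbTE Aj0) setU1K //.
apply/setP => C; rewrite !inE.
case: (C =P Ai) => [->|_]; first by rewrite AiA orbT.
case: (C =P Aj) => [->|_]; first by rewrite AjA orbT.
by rewrite /= !orbF.
Qed.

Definition reach (A A' : {set {set T}}) := exists m, 0 < phiY_n theta m A A'.

Lemma phiY_n_ge0 m (A C : {set {set T}}) : 0 <= phiY_n theta m A C.
Proof.
elim: m A => [|m IH] A /=; first by rewrite ler0n.
by apply: sumr_ge0 => B _; apply: mulr_ge0 => //; apply: phiY_ge0.
Qed.

Lemma prefix (A B C : {set {set T}}) m : clustering B -> 0 < phiY theta A B ->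
  0 < phiY_n theta m B C -> 0 < phiY_n theta m.+1 A C.
Proof.
move=> cB p1 p2 /=; apply: (sum_pos (i0 := B)) => //.
- by rewrite mem_index_enum.
- by move=> D _ _; apply: mulr_ge0; [apply: phiY_ge0|apply: phiY_n_ge0].
by apply: mulr_gt0.
Qed.

Lemma postfix_eq m (A C : {set {set T}}) : clustering A -> clustering C ->
  phiY_n theta m.+1 A C =
  \sum_(B | clustering B) phiY_n theta m A B * phiY theta B C.
Proof.
move=> cA cC; elim: m A cA => [|m IH] A cA.
  rewrite /= (bigD1 C) //= eqxx mulr1 big1 ?addr0; last first.
    by move=> B /andP[_ /negbTE ->]; rewrite mulr0.
  rewrite (bigD1 A) //= eqxx mul1r big1 ?addr0 //.
  by move=> B /andP[_]; rewrite eq_sym => /negbTE ->; rewrite mul0r.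
transitivity (\sum_(B | clustering B) phiY theta A B * phiY_n theta m.+1 B C); first by [].
under eq_bigr => B cB do rewrite (IH B cB) big_distrr.
rewrite exchange_big /=; apply: eq_bigr => D _.
by rewrite /= mulr_suml; apply: eq_bigr => B _; rewrite mulrA.
Qed.

Lemma postfix (A B C : {set {set T}}) m : clustering A -> clustering B -> clustering C ->
  0 < phiY_n theta m A B -> 0 < phiY theta B C -> 0 < phiY_n theta m.+1 A C.
Proof.
move=> cA cB cC p1 p2; rewrite postfix_eq //; apply: (sum_pos (i0 := B)) => //.
- by rewrite mem_index_enum.
- by move=> D _ _; apply: mulr_ge0; [apply: phiY_n_ge0|apply: phiY_ge0].
by apply: mulr_gt0.
Qed.

Hypothesis Tn0 : (0 < #|T|)%N.

Definition top : {set {set T}} := [set [set: T]].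

Lemma setT_neq0 : [set: T] != finset.set0.
Proof. by rewrite -card_gt0 cardsT. Qed.

Lemma one_block (A : {set {set T}}) : clustering A -> (#|A| <= 1)%N -> A = top.
Proof.
rewrite /clustering => hA c1.
have cov := cover_partition hA.
have : #|A| == 1%N.
  rewrite eqn_leq c1 card_gt0; apply/negP => /eqP A0.
  by move: cov; rewrite A0 /finset.cover big_set0 => /eqP; rewrite eq_sym (negbTE setT_neq0).
case/cards1P => X AX; move: cov; rewrite AX cover1 => ->; by [].
Qed.

Lemma phase1 n (A : {set {set T}}) : clustering A -> (#|A| <= n)%N -> reach A top.
Proof.
elim: n A => [|n IH] A cA cn.
  by rewrite (one_block cA (leq_trans cn (leq0n 1))); exists 0%N; rewrite /= eqxx ltr01.
case: (leqP #|A| 1) => c1.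
  by rewrite (one_block cA c1); exists 0%N; rewrite /= eqxx ltr01.
case/card_gt1P: c1 => Ai [Aj [AiA AjA nij]].
have cB := merge_clust cA AiA AjA nij.
have [m hm] := IH _ cB (leq_trans (merge_card AiA AjA nij) cn).
exists m.+1; apply: (prefix cB _ hm).
apply: (phiY_pos (S := Ai) (j := Some Aj) AiA) => //.
- exact: partition_neq0 cA AiA.
- by rewrite !inE eq_sym nij.
- exact: merge_eq.
Qed.

Lemma clust_top : clustering top.
Proof.
rewrite /clustering /top /finset.partition cover1 eqxx /= inE eq_sym setT_neq0 andbT.
by apply/finset.trivIsetP => X Y; rewrite !inE => /eqP -> /eqP ->; rewrite eqxx.
Qed.

Lemma phase2 n (A A' : {set {set T}}) : clustering A -> clustering A' ->
  (#|A'| <= n)%N -> reach A A'.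
Proof.
move=> cA; elim: n A' => [|n IH] A' cA' cn.
  by rewrite (one_block cA' (leq_trans cn (leq0n 1))); exact: phase1 cA (leqnn _).
case: (leqP #|A'| 1) => c1.
  by rewrite (one_block cA' c1); exact: phase1 cA (leqnn _).
case/card_gt1P: c1 => Ai [Aj [AiA AjA nij]].
have cB := merge_clust cA' AiA AjA nij.
have [m hm] := IH _ cB (leq_trans (merge_card AiA AjA nij) cn).
exists m.+1; apply: (postfix cA cB cA' hm).
apply: (phiY_pos (Ai := Aj :|: Ai) (S := Ai) (j := None)).
- by rewrite /merge setU11.
- exact: finset.subsetUr.
- exact: partition_neq0 cA' AiA.
- by [].
- exact: merge_back.
Qed.

End Main.
Unset Implicit Arguments. Set Strict Implicit.

Theorem lemma19 (R : realType) (theta1 : R) (T : finType) :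
  0 < theta1 -> (0 < #|T|)%N ->
  forall A A' : {set {set T}}, clustering A -> clustering A' ->
  exists m : nat, 0 < phiY_n theta1 m A A'.
Proof.
move=> th0 Tn0 A A' cA cA'.
exact: (phase2 th0 Tn0 cA cA' (leqnn _)).
Qed.
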